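(* Let $\Lambda$ be a set of pairwise compatible libraries, $L$ a library compatible with all of them and with $L\notin\Lambda$, and $I$ an implementation of $L$ that is well defined for $L$ using $\Lambda$. If $I$ is locally sound, then $I$ is a sound implementation of $L$ using $\Lambda$: for every concurrent program $\vec p$ whose method calls are all to methods of libraries in $\Lambda\uplus\{L\}$ and such that $\mathsf{loc}(I)\cap\mathsf{loc}(\vec p)=\emptyset$, we have $\mathsf{outcome}_\Lambda(\langle\!\langle\vec p\rangle\!\rangle_I)\subseteq\mathsf{outcome}_{\Lambda\uplus\{L\}}(\vec p)$.
   Context: Fix a set $\mathsf{Val}$ of values, a subset $\mathsf{Loc}\subseteq\mathsf{Val}$ of locations, a set $\mathsf{Method}$ of methods, a finite set of threads $\mathsf{Tid}=\{1,\dots,T\}$, and $\mathsf{EventId}=\mathbb N$. Programs. Sequential programs are given by the grammar $p::= v \mid m(v_1,\dots,v_k)\mid \mathtt{let}\ p\ \mathsf f\mid \mathtt{loop}\ p\mid \mathtt{break}_k\ v$, where $v,v_i\in\mathsf{Val}$, $m\in\mathsf{Method}$, $\mathsf f:\mathsf{Val}\to\mathsf{SeqProg}$, and $k\in\mathbb N^{+}$. A concurrent program is a tuple $\vec p=\langle p_1,\dots,p_T\rangle$ of sequential programs, $p_t$ run by thread $t$. Events and plain executions. Labels are $\mathsf{Lab}=\mathsf{Method}\times\mathsf{Val}^*\times\mathsf{Val}$ (method, inputs, output); events are $\mathsf{Event}=\mathsf{Tid}\times\mathsf{EventId}\times\mathsf{Lab}$; for $e=\langle t,\iota,l\rangle$,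 $\mathrm{thread}(e)=t$. A plain execution is a pair $\langle E,po\rangle$ with $E\subseteq\mathsf{Event}$, $po\subseteq E\times E$, $po=\bigcup_{t}po|_t$, where $po|_t$ (restriction to events of thread $t$) is a strict total order on the events of $t$. Write $\emptyset_G=\langle\emptyset,\emptyset\rangle$ and $\{e\}_G=\langle\{e\},\emptyset\rangle$. For $G_i=\langle E_i,po_i\rangle$ with $E_1\cap E_2=\emptyset$: $G_1;G_2=\langle E_1\cup E_2,\,po_1\cup po_2\cup(E_1\times E_2)\rangle$ and $G_1\parallel G_2=\langle E_1\cup E_2,\,po_1\cup po_2\rangle$. Plain semantics. $[\![p]\!]_t$ is a set of pairs $\langle\langle v,k\rangle,G\rangle$ (output value $v$, break number $k\in\mathbb N$, plain execution $G$): $[\![v]\!]_t=\{\langle\langle v,0\rangle,\emptyset_G\rangle\}$; $[\![\mathtt{break}_k\,v]\!]_t=\{\langle\langle v,k\rangle,\emptyset_G\rangle\}$; $[\![m(\vec v)]\!]_t=\{\langle\langle v',0\rangle,\{\langle t,\iota,\langle m,\vec v,v'\rangle\rangle\}_G\rangle : v'\in\mathsf{Val},\iota\in\mathsf{EventId}\}$; $[\![\mathtt{let}\ p\ \mathsf f]\!]_t=\{\langle r,G_1;G_2\rangle:\langle\langle v,0\rangle,G_1\rangle\in[\![p]\!]_t,\ \langle r,G_2\rangle\in[\![\mathsf f\,v]\!]_t\}\cup\{\langle\langle v,k\rangle,G_1\rangle\in[\![p]\!]_t: k\neq0\}$; $[\![\mathtt{loop}\ p]\!]_t=\bigcup_{j\in\mathbb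 N}\{\langle\langle v,k\rangle,G_0;\dots;G_j\rangle : (\forall i<j.\ \langle\langle\_,0\rangle,G_i\rangle\in[\![p]\!]_t)\wedge\langle\langle v,k+1\rangle,G_j\rangle\in[\![p]\!]_t\}$ (compositions taken only when event sets are disjoint). For concurrent programs, $[\![\langle p_1,\dots,p_T\rangle]\!]=\{\langle\langle v_1,\dots,v_T\rangle,\parallel_{t}G_t\rangle:\forall t.\ \langle\langle v_t,0\rangle,G_t\rangle\in[\![p_t]\!]_t\}$. Stamps and executions. Fix a set $\mathsf{Stamp}$ and a relation $to\subseteq\mathsf{Stamp}\times\mathsf{Stamp}$. An execution is $\langle E,po,stmp,so,hb\rangle$ where $\langle E,po\rangle$ is a plain execution, $stmp$ maps each event of $E$ to a nonempty set of stamps, inducing subevents $\mathsf{SEvent}=\{\langle e,a\rangle: e\in E, a\in stmp(e)\}$, and $so,hb\subseteq\mathsf{SEvent}\times\mathsf{SEvent}$. Its preserved program order is $ppo=\{\langle\langle e_1,a_1\rangle,\langle e_2,a_2\rangle\rangle:\langle e_1,e_2\rangle\in po,\ a_i\in stmp(e_i),\ \langle a_1,a_2\rangle\in to\}$. Libraries. A library is a triple $L=\langle M,\mathsf{loc},\mathcal C\rangle$: $M\subseteq\mathsf{Method}$; $\mathsf{loc}$ maps each event whose method lies in $M$ to a set of locations; $\mathcal C$ is a set of executions satisfying (monotonicity) if $\langle E,po,stmp,so,hb\rangle\in\mathcal C$ and $(ppo\cup so)^+\subseteq hb'\subseteq hb$ then $\langle E,po,stmp,so,hb'\rangle\in\mathcal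 C$, and (decomposability) if $\langle E_1\uplus E_2,po,stmp,so,hb\rangle\in\mathcal C$ and $\mathsf{loc}(E_1)\cap\mathsf{loc}(E_2)=\emptyset$ then its restriction to $E_1$ (restricting $po$, $stmp$, and $so,hb$ to subevents of events in $E_1$) is in $\mathcal C$. For a set $E$ of events, $E|_L$ is the set of events of $E$ whose method is in $L.M$; for an execution, restriction $|_L$ restricts $E$, $po$, $stmp$, and $so,hb$ to (subevents of) events in $E|_L$. For an event $e$, $\mathsf{loc}(e)$ is given by the library containing its method, and $\mathsf{loc}(E)=\bigcup_{e\in E}\mathsf{loc}(e)$. Two libraries are compatible if their method sets are disjoint. Consistency and outcomes. For a set $\Lambda$ of pairwise compatible libraries, an execution $\langle E,po,stmp,so,hb\rangle$ is $\Lambda$-consistent if: $(ppo\cup so)^+\subseteq hb$ and $hb$ is a strict partial order; $E=\bigcup_{L\in\Lambda}E|_L$ and $so=\bigcup_{L\in\Lambda}so|_L$; and for every $L\in\Lambda$ the restriction to $L$ belongs to $L.\mathcal C$. Then $\mathsf{outcome}_\Lambda(\vec p)=\{\vec v:\exists\,\Lambda\text{-consistent }\langle E,po,stmp,so,hb\rangle.\ \langle\vec v,\langle E,po\rangle\rangle\in[\![\vec p]\!]\}$, and $\mathsf{loc}(\vec p)=\bigcup_{\langle\_,\langle E,\_\rangle\rangle\in[\![\vec p]\!]}\mathsf{loc}(E)$. Implementations. An implementation of $L$ is a function $I:\mathsf{Tid}\times L.M\times\mathsf{Val}^*\to\mathsf{SeqProg}$. It is well defined for $L$ using $\Lambda$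 if $L\notin\Lambda$ and for all $t,m,\vec v$: $I(t,m,\vec v)$ only calls methods of libraries in $\Lambda$; no element of $[\![I(t,m,\vec v)]\!]_t$ has the form $\langle\langle\_,k+1\rangle,\_\rangle$; and if $\langle\langle v,0\rangle,\langle E,po\rangle\rangle\in[\![I(t,m,\vec v)]\!]_t$ then $E\neq\emptyset$. $\mathsf{loc}(I)=\bigcup_{t,m,\vec v}\bigcup_{\langle\_,\langle E,\_\rangle\rangle\in[\![I(t,m,\vec v)]\!]_t}\mathsf{loc}(E)$. The translation $\langle\!\langle\cdot\rangle\!\rangle$ replaces, in thread $t$, each call $m(\vec v)$ with $m\in L.M$ by $I(t,m,\vec v)$ and leaves everything else unchanged ($\langle\!\langle v\rangle\!\rangle_t=v$, $\langle\!\langle\mathtt{break}_k v\rangle\!\rangle_t=\mathtt{break}_k v$, $\langle\!\langle\mathtt{loop}\,p\rangle\!\rangle_t=\mathtt{loop}\,\langle\!\langle p\rangle\!\rangle_t$, $\langle\!\langle\mathtt{let}\,p\,\mathsf f\rangle\!\rangle_t=\mathtt{let}\,\langle\!\langle p\rangle\!\rangle_t\,(\lambda v.\langle\!\langle\mathsf f\,v\rangle\!\rangle_t)$), and $\langle\!\langle\langle p_1,\dots,p_T\rangle\rangle\!\rangle_I=\langle\langle\!\langle p_1\rangle\!\rangle_1,\dots,\langle\!\langle p_T\rangle\!\rangle_T\rangle$. Abstraction. For plain executions $G=\langle E,po\rangle$ (using methods of $\Lambda$) and $G'=\langle E',po'\rangle$ (using methods of $L$), a surjective $f:E\to E'$ abstracts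 $G$ to $G'$ if: $E|_L=\emptyset$ and $E'|_L=E'$; $f(po)\subseteq(po')^*$ (where $f(r)=\{\langle f(x),f(y)\rangle:\langle x,y\rangle\in r\}$ and $^*$ is reflexive-transitive closure) and for all $e_1,e_2$, $\langle f(e_1),f(e_2)\rangle\in po'$ implies $\langle e_1,e_2\rangle\in po$; and for every $e'=\langle t,\iota,\langle m,\vec v,v'\rangle\rangle\in E'$, $\langle\langle v',0\rangle,G|_{f^{-1}(e')}\rangle\in[\![I(t,m,\vec v)]\!]_t$, where $G|_A=\langle A,po\cap(A\times A)\rangle$. Local soundness. A well-defined implementation $I$ of $L$ using $\Lambda$ is locally sound if, whenever $\mathcal G=\langle E,po,stmp,so,hb\rangle$ is $\Lambda$-consistent and $f$ abstracts $\langle E,po\rangle$ to $\langle E',po'\rangle$, there exist $stmp'$ (on $E'$), $so'$, and a function $g$ from the subevents of $\langle E',po',stmp'\rangle$ to $\mathcal G.\mathsf{SEvent}$ such that: (i) if $g(\langle e',a'\rangle)=\langle e,a\rangle$ then $f(e)=e'$, and for every stamp $a_0$ with $\langle a_0,a'\rangle\in to$ there is $\langle e_1,a_1\rangle\in\mathcal G.\mathsf{SEvent}$ with $f(e_1)=e'$, $\langle a_0,a_1\rangle\in to$ and $\langle\langle e_1,a_1\rangle,\langle e,a\rangle\rangle\in hb^*$, and for every stamp $a_0$ with $\langle a',a_0\rangle\in to$ there is $\langle e_2,a_2\rangle\in\mathcal G.\mathsf{SEvent}$ with $f(e_2)=e'$, $\langle a_2,a_0\rangle\in to$ and $\langle\langle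 e,a\rangle,\langle e_2,a_2\rangle\rangle\in hb^*$; (ii) $g(so')\subseteq hb$; (iii) for every transitive $hb'$ with $(ppo'\cup so')^+\subseteq hb'$ and $g(hb')\subseteq hb$, we have $\langle E',po',stmp',so',hb'\rangle\in L.\mathcal C$, where $ppo'$ is the preserved program order of $\langle E',po',stmp'\rangle$. *)

(* Defs.v *)
From Stdlib Require Import List PArith Relations ClassicalEpsilon.
From mathcomp Require Import ssreflect ssrfun ssrbool eqtype ssrnat fintype.

Set Implicit Arguments.
Unset Strict Implicit.

Section Model.

Context (Val Loc Method : Type) (T : nat) (Stamp : Type)
        (to : Stamp -> Stamp -> Prop).

(* Threads {1,...,T}, represented (0-based) as 'I_T. *)
Definition Tid := 'I_T.

Inductive SeqProg : Type :=
| PVal   (v : Val)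
| PCall  (m : Method) (vs : list Val)
| PLet   (p : SeqProg) (f : Val -> SeqProg)
| PLoop  (p : SeqProg)
| PBreak (k : positive) (v : Val).

Definition ConcProg := Tid -> SeqProg.

Record Event : Type := mkEv {
  ev_tid : Tid; ev_id : nat; ev_meth : Method; ev_args : list Val; ev_out : Val }.

Record PExec : Type := mkPExec { pE : Event -> Prop; ppo : Event -> Event -> Prop }.

Definition is_plain (G : PExec) : Prop :=
  (forall x y, ppo G x y -> pE G x /\ pE G y) /\
  (forall x y, ppo G x y -> ev_tid x = ev_tid y) /\
  (forall x, ~ ppo G x x) /\
  (forall x y z, ppo G x y -> ppo G y z -> ppo G x z) /\
  (forall x y, pE G x -> pE G y -> ev_tid x = ev_tid y -> x <> y ->
     ppo G x y \/ ppo G y x).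

Definition peq (G H : PExec) : Prop :=
  (forall e, pE G e <-> pE H e) /\ (forall x y, ppo G x y <-> ppo H x y).

Definition emptyG : PExec := mkPExec (fun _ => False) (fun _ _ => False).
Definition singleG (e : Event) : PExec := mkPExec (fun x => x = e) (fun _ _ => False).

Definition disjointE (A B : Event -> Prop) : Prop := forall e, A e -> B e -> False.

Definition seqG (G1 G2 : PExec) : PExec :=
  mkPExec (fun e => pE G1 e \/ pE G2 e)
          (fun x y => ppo G1 x y \/ ppo G2 x y \/ (pE G1 x /\ pE G2 y)).

Fixpoint seqn (Gs : nat -> PExec) (j : nat) : PExec :=
  match j with
  | 0 => Gs 0
  | S j' => seqG (seqn Gs j') (Gs (S j'))
  end.

Definition parG (Gs : Tid -> PExec) : PExec :=
  mkPExec (fun e => exists t, pE (Gs t) e) (fun x y => exists t, ppo (Gs t) x y).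

(* [sem t p v k G] : <<v,k>,G> \in [[p]]_t *)
Fixpoint sem (t : Tid) (p : SeqProg) (v : Val) (k : nat) (G : PExec) : Prop :=
  match p with
  | PVal v0 => v = v0 /\ k = 0 /\ peq G emptyG
  | PBreak kk v0 => v = v0 /\ k = Pos.to_nat kk /\ peq G emptyG
  | PCall m vs => k = 0 /\ exists iota, peq G (singleG (mkEv t iota m vs v))
  | PLet p1 f =>
      (exists v1 G1 G2, sem t p1 v1 0 G1 /\ sem t (f v1) v k G2 /\
         disjointE (pE G1) (pE G2) /\ peq G (seqG G1 G2))
      \/ (sem t p1 v k G /\ k <> 0)
  | PLoop p1 =>
      exists (j : nat) (Gs : nat -> PExec),
        (forall i, i < j -> exists v', sem t p1 v' 0 (Gs i)) /\
        sem t p1 v (S k) (Gs j) /\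
        (forall i i', i <= j -> i' <= j -> i <> i' -> disjointE (pE (Gs i)) (pE (Gs i'))) /\
        peq G (seqn Gs j)
  end.

Definition sem_conc (p : ConcProg) (vs : Tid -> Val) (G : PExec) : Prop :=
  exists Gs : Tid -> PExec,
    (forall t, sem t (p t) (vs t) 0 (Gs t)) /\
    (forall t t', t <> t' -> disjointE (pE (Gs t)) (pE (Gs t'))) /\
    peq G (parG Gs).

Definition SEv : Type := (Event * Stamp)%type.

Record Exec : Type := mkExec {
  xE : Event -> Prop;
  xpo : Event -> Event -> Prop;
  xstmp : Event -> Stamp -> Prop;
  xso : SEv -> SEv -> Prop;
  xhb : SEv -> SEv -> Prop }.

Definition xplain (X : Exec) : PExec := mkPExec (xE X) (xpo X).

Definition subev (E : Event -> Prop) (stmp : Event -> Stamp -> Prop) (x : SEv) : Prop :=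
  E (fst x) /\ stmp (fst x) (snd x).

Definition xSE (X : Exec) : SEv -> Prop := subev (xE X) (xstmp X).

(* stmp is a map from events of E to nonempty sets of stamps *)
Definition is_stmp (E : Event -> Prop) (stmp : Event -> Stamp -> Prop) : Prop :=
  (forall e, E e -> exists a, stmp e a) /\ (forall e a, stmp e a -> E e).

Definition is_exec (X : Exec) : Prop :=
  is_plain (xplain X) /\ is_stmp (xE X) (xstmp X) /\
  (forall x y, xso X x y -> xSE X x /\ xSE X y) /\
  (forall x y, xhb X x y -> xSE X x /\ xSE X y).

Definition ppo_of (po : Event -> Event -> Prop) (stmp : Event -> Stamp -> Prop)
  (x y : SEv) : Prop :=
  po (fst x) (fst y) /\ stmp (fst x) (snd x) /\ stmp (fst y) (snd y) /\ to (snd x) (snd y).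

Definition xppo (X : Exec) : SEv -> SEv -> Prop := ppo_of (xpo X) (xstmp X).

Definition union_rel {A : Type} (r s : A -> A -> Prop) : A -> A -> Prop :=
  fun x y => r x y \/ s x y.

Definition incl_rel {A : Type} (r s : A -> A -> Prop) : Prop := forall x y, r x y -> s x y.

Definition restrict (X : Exec) (P : Event -> Prop) : Exec :=
  let E' := fun e => xE X e /\ P e in
  mkExec E'
    (fun x y => xpo X x y /\ E' x /\ E' y)
    (fun e a => xstmp X e a /\ E' e)
    (fun x y => xso X x y /\ E' (fst x) /\ E' (fst y))
    (fun x y => xhb X x y /\ E' (fst x) /\ E' (fst y)).

Record Library : Type := mkLib {
  lM : Method -> Prop;
  lloc : Event -> Loc -> Prop;   (* meaningful for events whose method is in lM *)
  lC : Exec -> Prop }.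

Definition locL (L : Library) (e : Event) (l : Loc) : Prop :=
  lM L (ev_meth e) /\ lloc L e l.

Definition locSetL (L : Library) (E : Event -> Prop) (l : Loc) : Prop :=
  exists e, E e /\ locL L e l.

Definition is_library (L : Library) : Prop :=
  (forall X hb',
     lC L X ->
     incl_rel (clos_trans _ (union_rel (xppo X) (xso X))) hb' ->
     incl_rel hb' (xhb X) ->
     lC L (mkExec (xE X) (xpo X) (xstmp X) (xso X) hb')) /\
  (forall X (E1 E2 : Event -> Prop),
     lC L X ->
     (forall e, xE X e <-> E1 e \/ E2 e) -> disjointE E1 E2 ->
     (forall l, locSetL L E1 l -> locSetL L E2 l -> False) ->
     lC L (restrict X E1)).

Definition compatible (L1 L2 : Library) : Prop :=
  forall m, lM L1 m -> lM L2 m -> False.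

Definition LibSet := Library -> Prop.

Definition pairwise_compatible (Lam : LibSet) : Prop :=
  forall L1 L2, Lam L1 -> Lam L2 -> L1 <> L2 -> compatible L1 L2.

Definition add_lib (Lam : LibSet) (L : Library) : LibSet :=
  fun L' => Lam L' \/ L' = L.

Definition locLam (Lam : LibSet) (e : Event) (l : Loc) : Prop :=
  exists L, Lam L /\ locL L e l.

Definition methods_of (Lam : LibSet) (m : Method) : Prop :=
  exists L, Lam L /\ lM L m.

Definition consistent (Lam : LibSet) (X : Exec) : Prop :=
  is_exec X /\
  incl_rel (clos_trans _ (union_rel (xppo X) (xso X))) (xhb X) /\
  (forall x, ~ xhb X x x) /\
  (forall x y z, xhb X x y -> xhb X y z -> xhb X x z) /\
  (forall e, xE X e -> methods_of Lam (ev_meth e)) /\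
  (forall x y, xso X x y ->
     exists L, Lam L /\ lM L (ev_meth (fst x)) /\ lM L (ev_meth (fst y))) /\
  (forall L, Lam L -> lC L (restrict X (fun e => lM L (ev_meth e)))).

Definition outcome (Lam : LibSet) (p : ConcProg) (vs : Tid -> Val) : Prop :=
  exists X, consistent Lam X /\ sem_conc p vs (xplain X).

Fixpoint calls_only (P : Method -> Prop) (p : SeqProg) : Prop :=
  match p with
  | PVal _ => True
  | PBreak _ _ => True
  | PCall m _ => P m
  | PLet p1 f => calls_only P p1 /\ forall v, calls_only P (f v)
  | PLoop p1 => calls_only P p1
  end.

Definition locProg (Lam : LibSet) (p : ConcProg) (l : Loc) : Prop :=
  exists vs G e, sem_conc p vs G /\ pE G e /\ locLam Lam e l.

Definition Impl := Tid -> Method -> list Val -> SeqProg.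

Definition well_defined (I : Impl) (L : Library) (Lam : LibSet) : Prop :=
  ~ Lam L /\
  forall t m vs, lM L m ->
    calls_only (methods_of Lam) (I t m vs) /\
    (forall v k G, sem t (I t m vs) v k G -> k = 0) /\
    (forall v G, sem t (I t m vs) v 0 G -> exists e, pE G e).

Definition locImpl (I : Impl) (L : Library) (Lam : LibSet) (l : Loc) : Prop :=
  exists t m vs v k G e,
    lM L m /\ sem t (I t m vs) v k G /\ pE G e /\ locLam Lam e l.

Fixpoint trans (I : Impl) (L : Library) (t : Tid) (p : SeqProg) : SeqProg :=
  match p with
  | PVal v => PVal v
  | PBreak k v => PBreak k v
  | PCall m vs =>
      if excluded_middle_informative (lM L m) then I t m vs else PCall m vs
  | PLet p1 f => PLet (trans I L t p1) (fun v => trans I L t (f v))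
  | PLoop p1 => PLoop (trans I L t p1)
  end.

Definition transC (I : Impl) (L : Library) (p : ConcProg) : ConcProg :=
  fun t => trans I L t (p t).

Definition restrictG (G : PExec) (A : Event -> Prop) : PExec :=
  mkPExec A (fun x y => ppo G x y /\ A x /\ A y).

Definition abstracts (I : Impl) (L : Library) (G G' : PExec)
    (f : Event -> Event) : Prop :=
  (forall e, pE G e -> pE G' (f e)) /\
  (forall e', pE G' e' -> exists e, pE G e /\ f e = e') /\
  (forall e, pE G e -> ~ lM L (ev_meth e)) /\
  (forall e', pE G' e' -> lM L (ev_meth e')) /\
  (forall e1 e2, ppo G e1 e2 -> clos_refl_trans _ (ppo G') (f e1) (f e2)) /\
  (forall e1 e2, pE G e1 -> pE G e2 -> ppo G' (f e1) (f e2) -> ppo G e1 e2) /\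
  (forall e', pE G' e' ->
     sem (ev_tid e') (I (ev_tid e') (ev_meth e') (ev_args e')) (ev_out e') 0
         (restrictG G (fun e => pE G e /\ f e = e'))).

Definition locally_sound (I : Impl) (L : Library) (Lam : LibSet) : Prop :=
  forall (X : Exec) (G' : PExec) (f : Event -> Event),
    consistent Lam X -> is_plain G' -> abstracts I L (xplain X) G' f ->
    exists (stmp' : Event -> Stamp -> Prop) (so' : SEv -> SEv -> Prop) (g : SEv -> SEv),
      is_stmp (pE G') stmp' /\
      (forall x y, so' x y -> subev (pE G') stmp' x /\ subev (pE G') stmp' y) /\
      (forall x, subev (pE G') stmp' x -> xSE X (g x)) /\
      (* (i) *)
      (forall e' a' e a, subev (pE G') stmp' (e', a') -> g (e', a') = (e, a) ->
         f e = e' /\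
         (forall a0, to a0 a' -> exists e1 a1,
            xSE X (e1, a1) /\ f e1 = e' /\ to a0 a1 /\
            clos_refl_trans _ (xhb X) (e1, a1) (e, a)) /\
         (forall a0, to a' a0 -> exists e2 a2,
            xSE X (e2, a2) /\ f e2 = e' /\ to a2 a0 /\
            clos_refl_trans _ (xhb X) (e, a) (e2, a2))) /\
      (forall x y, so' x y -> xhb X (g x) (g y)) /\
      (forall hb' : SEv -> SEv -> Prop,
         (forall x y, hb' x y -> subev (pE G') stmp' x /\ subev (pE G') stmp' y) ->
         (forall x y z, hb' x y -> hb' y z -> hb' x z) ->
         incl_rel (clos_trans _ (union_rel (ppo_of (ppo G') stmp') so')) hb' ->
         (forall x y, hb' x y -> xhb X (g x) (g y)) ->
         lC L (mkExec (pE G') (ppo G') stmp' so' hb')).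

Definition sound (I : Impl) (L : Library) (Lam : LibSet) : Prop :=
  forall p : ConcProg,
    (forall t, calls_only (methods_of (add_lib Lam L)) (p t)) ->
    (forall l, locImpl I L Lam l -> locProg (add_lib Lam L) p l -> False) ->
    forall vs, outcome Lam (transC I L p) vs -> outcome (add_lib Lam L) p vs.

End Model.

(* Main.v *)
Require Import Defs.
From Stdlib Require Import List PArith Relations ClassicalEpsilon Classical FunctionalExtensionality PropExtensionality Lia.
From mathcomp Require Import ssreflect ssrfun ssrbool eqtype ssrnat fintype zify.

Set Implicit Arguments.
Unset Strict Implicit.

Section S1.
Context (Val Method : Type) (T : nat).
Notation PE := (PExec Val Method T).
Notation Ev := (Event Val Method T).

Lemma peq_refl (G : PE) : peq G G.
Proof. split; intros; tauto. Qed.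
Lemma peq_sym (G H : PE) : peq G H -> peq H G.
Proof. intros [H1 H2]; split; intros; [rewrite H1|rewrite H2]; tauto. Qed.
Lemma peq_trans (G H K : PE) : peq G H -> peq H K -> peq G K.
Proof. intros [H1 H2] [H3 H4]; split; intros; [rewrite H1 H3|rewrite H2 H4]; tauto. Qed.

Lemma sem_peq t p v k (G H : PE) : peq G H -> sem t p v k G -> sem t p v k H.
Proof.
  intros Hq. revert G H Hq v k.
  induction p as [v0|m vs|p1 IH1 f IHf|p1 IH1|kk v0]; simpl; intros G H Hq v k Hs;
  (have Q : forall K : PE, peq G K -> peq H K by intros K HK; eapply peq_trans; [apply peq_sym; exact Hq|exact HK]).
  - destruct Hs as [A [B C]]; auto.
  - destruct Hs as [A [iota C]]; eauto.
  - destruct Hs as [[v1 [G1 [G2 [A [B [C D]]]]]]|[A B]].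
    + left; exists v1, G1, G2; auto.
    + right; split; eauto.
  - destruct Hs as [j [Gs [A [B [C D]]]]]; exists j, Gs; auto.
  - destruct Hs as [A [B C]]; auto.
Qed.
Definition po_in (G : PE) := forall x y, ppo G x y -> pE G x /\ pE G y.

Lemma seqn_E (Gs : nat -> PE) j e : pE (seqn Gs j) e <-> exists i, i <= j /\ pE (Gs i) e.
Proof.
  induction j as [|j IH]; simpl.
  - split; [intros; exists 0; split; auto|intros [i [Hi He]]; assert (E : i = 0) by lia; subst i; auto].
  - rewrite IH; split.
    + intros [[i [Hi He]]|He]; [exists i; split; [lia|auto]|exists j.+1; split; auto].
    + intros [i [Hi He]]. destruct (leqP i j) as [h|h]; [left; exists i; auto|].
      right; have -> : j.+1 = i by lia. auto.
Qed.

Lemma seqn_po_in (Gs : nat -> PE) j : (forall i, i <= j -> po_in (Gs i)) -> po_in (seqn Gs j).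
Proof.
  induction j as [|j IH]; simpl; intros H; [apply H; auto|].
  intros x y [Hp|[Hp|[Hx Hy]]]; simpl; auto.
  - destruct (IH (fun i Hi => H i (leqW Hi)) x y Hp); tauto.
  - destruct (H j.+1 (leqnn _) x y Hp); tauto.
Qed.

Lemma seqn_ext (Gs Hs : nat -> PE) j : (forall i, i <= j -> Gs i = Hs i) -> seqn Gs j = seqn Hs j.
Proof.
  induction j as [|j IH]; simpl; intros H; [apply H; auto|].
  rewrite IH; last (intros; apply H; lia). rewrite (H j.+1); auto.
Qed.

Lemma sem_po_in t p : forall v k (G : PE), sem t p v k G -> po_in G.
Proof.
  induction p as [v0|m vs|p1 IH1 f IHf|p1 IH1|kk v0]; simpl; intros v k G Hs x y Hp.
  - destruct Hs as [_ [_ [_ Hq]]]. destruct (proj1 (Hq x y) Hp).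
  - destruct Hs as [_ [iota [_ Hq]]]. destruct (proj1 (Hq x y) Hp).
  - destruct Hs as [[v1 [G1 [G2 [A [B [C [D1 D2]]]]]]]|[A B]]; [|eapply IH1; eauto].
    rewrite !D1. destruct (proj1 (D2 x y) Hp) as [h|[h|h]]; simpl in *.
    + destruct (IH1 _ _ _ A _ _ h); tauto.
    + destruct (IHf _ _ _ _ B _ _ h); tauto.
    + tauto.
  - destruct Hs as [j [Gs [A [B [C [D1 D2]]]]]].
    have Hpo : po_in (seqn Gs j).
    { apply seqn_po_in. intros i Hi. destruct (leqP j i) as [h|h].
      - have -> : i = j by lia. eapply IH1; eauto.
      - destruct (A i h) as [v' Hv']. eapply IH1; eauto. }
    rewrite !D1. apply Hpo. apply D2; auto.
  - destruct Hs as [_ [_ [_ Hq]]]. destruct (proj1 (Hq x y) Hp).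
Qed.

Lemma sem_tid t p : forall v k (G : PE), sem t p v k G -> forall e, pE G e -> ev_tid e = t.
Proof.
  induction p as [v0|m vs|p1 IH1 f IHf|p1 IH1|kk v0]; simpl; intros v k G Hs e He.
  - destruct Hs as [_ [_ [Hq _]]]. destruct (proj1 (Hq e) He).
  - destruct Hs as [_ [iota [Hq _]]]. rewrite (proj1 (Hq e) He); auto.
  - destruct Hs as [[v1 [G1 [G2 [A [B [C [D1 D2]]]]]]]|[A B]]; [|eapply IH1; eauto].
    destruct (proj1 (D1 e) He); eauto.
  - destruct Hs as [j [Gs [A [B [C [D1 D2]]]]]].
    destruct (proj1 (seqn_E _ _ _) (proj1 (D1 e) He)) as [i [Hi Hei]].
    destruct (leqP j i) as [h|h].
    + have Ei : i = j by lia. subst i. eauto.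
    + destruct (A i h) as [v' Hv']. eauto.
  - destruct Hs as [_ [_ [Hq _]]]. destruct (proj1 (Hq e) He).
Qed.

Lemma calls_sem (P : Method -> Prop) t p : forall v k (G : PE), calls_only P p -> sem t p v k G -> forall e, pE G e -> P (ev_meth e).
Proof.
  induction p as [v0|m vs|p1 IH1 f IHf|p1 IH1|kk v0]; simpl; intros v k G Hc Hs e He.
  - destruct Hs as [_ [_ [Hq _]]]. destruct (proj1 (Hq e) He).
  - destruct Hs as [_ [iota [Hq _]]]. rewrite (proj1 (Hq e) He); auto.
  - destruct Hc as [Hc1 Hc2].
    destruct Hs as [[v1 [G1 [G2 [A [B [C [D1 D2]]]]]]]|[A B]]; [|eapply IH1; eauto].
    destruct (proj1 (D1 e) He); eauto.
  - destruct Hs as [j [Gs [A [B [C [D1 D2]]]]]].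
    destruct (proj1 (seqn_E _ _ _) (proj1 (D1 e) He)) as [i [Hi Hei]].
    destruct (leqP j i) as [h|h].
    + have Ei : i = j by lia. subst i. eauto.
    + destruct (A i h) as [v' Hv']. eauto.
  - destruct Hs as [_ [_ [Hq _]]]. destruct (proj1 (Hq e) He).
Qed.

End S1.

Section S2.
Context (Val Loc Method : Type) (T : nat) (Stamp : Type).
Context (L : Library Val Loc Method T Stamp) (I : Impl Val Method T).
Notation PE := (PExec Val Method T).
Notation Ev := (Event Val Method T).
Notation LM e := (lM L (ev_meth e)).

Record Abs (t : Tid T) (G G' : PE) (R : Ev -> Ev -> Prop) (n0 n1 : nat) : Prop := {
  ab_dom : forall e e', R e e' -> pE G e /\ pE G' e';
  ab_tot : forall e, pE G e -> exists e', R e e';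
  ab_fun : forall e e1 e2, R e e1 -> R e e2 -> e1 = e2;
  ab_sur : forall e', pE G' e' -> exists e, R e e';
  ab_cli : forall e e', R e e' -> ~ LM e' -> e' = e;
  ab_imp : forall e e', R e e' -> LM e' -> ev_tid e' = t /\ n0 <= ev_id e' < n1 /\
     sem t (I t (ev_meth e') (ev_args e')) (ev_out e') 0 (restrictG G (fun x => R x e'));
  ab_po1 : forall x y x' y', ppo G x y -> R x x' -> R y y' -> x' = y' \/ ppo G' x' y';
  ab_po2 : forall x y x' y', R x x' -> R y y' -> ppo G' x' y' -> ppo G x y }.

Lemma restrictG_peq (G H : PE) (A B : Ev -> Prop) : peq G H -> (forall x, A x <-> B x) ->
  peq (restrictG G A) (restrictG H B).
Proof. intros [H1 H2] HA; split; simpl; intros; [auto|rewrite H2 !HA; tauto]. Qed.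

Lemma abs_peq_l t G H G' R n0 n1 : peq G H -> Abs t G G' R n0 n1 -> Abs t H G' R n0 n1.
Proof.
  intros Hq [A1 A2 A3 A4 A5 A6 A7 A8]; have [Q1 Q2] := Hq; split; auto.
  - intros e e' h; rewrite -Q1; auto.
  - intros e h; apply A2; rewrite Q1; auto.
  - intros e e' h1 h2; destruct (A6 e e' h1 h2) as [? [? S]]; repeat split; auto.
    eapply sem_peq; [|exact S]. apply restrictG_peq; auto. intro; tauto.
  - intros x y x' y' h; apply A7; apply Q2; auto.
  - intros; apply Q2; eauto.
Qed.

Lemma abs_peq_r t G G' H' R n0 n1 : peq G' H' -> Abs t G G' R n0 n1 -> Abs t G H' R n0 n1.
Proof.
  intros Hq [A1 A2 A3 A4 A5 A6 A7 A8]; have [Q1 Q2] := Hq; split; auto.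
  - intros e e' h; rewrite -Q1; auto.
  - intros e' h; apply A4; rewrite Q1; auto.
  - intros x y x' y' h1 h2 h3; rewrite -Q2; eauto.
  - intros x y x' y' h1 h2 h3; rewrite -Q2 in h3; eauto.
Qed.

Lemma abs_id t (G : PE) n : (forall e, pE G e -> ~ LM e) ->
  Abs t G G (fun e e' => pE G e /\ e' = e) n n.
Proof.
  intros HL; split.
  - intros e e' [h1 h2]; subst; auto.
  - intros e h; exists e; auto.
  - intros e e1 e2 [_ h1] [_ h2]; subst; auto.
  - intros e' h; exists e'; auto.
  - intros e e' [_ h] _; auto.
  - intros e e' [h1 h2] h3; subst; exfalso; eapply HL; eauto.
  - intros x y x' y' h [_ h1] [_ h2]; subst; auto.
  - intros x y x' y' [_ h1] [_ h2]; subst; auto.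
Qed.

Definition disj (A B : Ev -> Prop) := disjointE A B.

Lemma abs_seq t G1 G2 G1' G2' R1 R2 n0 n1 n2 :
  n0 <= n1 -> n1 <= n2 ->
  Abs t G1 G1' R1 n0 n1 -> Abs t G2 G2' R2 n1 n2 ->
  disjointE (pE G1) (pE G2) -> po_in G1 -> po_in G2 -> po_in G1' -> po_in G2' ->
  disjointE (pE G1') (pE G2') /\
  Abs t (seqG G1 G2) (seqG G1' G2') (fun e e' => R1 e e' \/ R2 e e') n0 n2.
Proof.
  intros Hn1 Hn2 [A1 A2 A3 A4 A5 A6 A7 A8] [B1 B2 B3 B4 B5 B6 B7 B8] Hd P1 P2 P1' P2'.
  have D' : disjointE (pE G1') (pE G2').
  { intros e h1 h2. destruct (A4 e h1) as [x hx]; destruct (B4 e h2) as [y hy].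
    destruct (classic (LM e)) as [hL|hL].
    - destruct (A6 _ _ hx hL) as [_ [? _]]; destruct (B6 _ _ hy hL) as [_ [? _]]; lia.
    - have ex := A5 _ _ hx hL; have ey := B5 _ _ hy hL; subst.
      eapply Hd; [apply (proj1 (A1 _ _ hx))|apply (proj1 (B1 _ _ hy))]. }
  have R1only : forall x x', pE G1 x -> (R1 x x' \/ R2 x x') -> R1 x x'.
  { intros x x' h [h'|h']; auto; exfalso; eapply Hd; eauto; apply (B1 _ _ h'). }
  have R2only : forall x x', pE G2 x -> (R1 x x' \/ R2 x x') -> R2 x x'.
  { intros x x' h [h'|h']; auto; exfalso; eapply Hd; eauto; apply (A1 _ _ h'). }
  have R1only' : forall x x', pE G1' x' -> (R1 x x' \/ R2 x x') -> R1 x x'.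
  { intros x x' h [h'|h']; auto; exfalso; eapply D'; eauto; apply (B1 _ _ h'). }
  have R2only' : forall x x', pE G2' x' -> (R1 x x' \/ R2 x x') -> R2 x x'.
  { intros x x' h [h'|h']; auto; exfalso; eapply D'; eauto; apply (A1 _ _ h'). }
  split; auto; split; simpl.
  - intros e e' [h|h]; [destruct (A1 _ _ h)|destruct (B1 _ _ h)]; auto.
  - intros e [h|h]; [destruct (A2 _ h)|destruct (B2 _ h)]; eauto.
  - intros e e1 e2 [h1|h1] [h2|h2]; eauto.
    + exfalso; eapply Hd; [apply (A1 _ _ h1)|apply (B1 _ _ h2)].
    + exfalso; eapply Hd; [apply (A1 _ _ h2)|apply (B1 _ _ h1)].
  - intros e' [h|h]; [destruct (A4 _ h)|destruct (B4 _ h)]; eauto.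
  - intros e e' [h|h]; eauto.
  - intros e e' [h|h] hL.
    + destruct (A6 _ _ h hL) as [? [? S]]; split; [auto|split; [lia|]].
      eapply sem_peq; [|exact S]. split; simpl.
      * intro x; split; auto. intro; apply R1only'; auto. apply (A1 _ _ h).
      * intros x y; split.
        -- intros [hp [hx hy]]; split; [|auto].
           left; auto.
        -- intros [hp [hx hy]].
           have hx1 := R1only' _ _ (proj2 (A1 _ _ h)) hx.
           have hy1 := R1only' _ _ (proj2 (A1 _ _ h)) hy.
           split; auto. destruct hp as [hp|[hp|[_ hp]]]; auto.
           ++ exfalso; eapply Hd; [apply (A1 _ _ hx1)|apply (P2 _ _ hp)].
           ++ exfalso; eapply Hd; [apply (A1 _ _ hy1)|apply hp].
    + destruct (B6 _ _ h hL) as [? [? S]]; split; [auto|split; [lia|]].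
      eapply sem_peq; [|exact S]. split; simpl.
      * intro x; split; auto. intro; apply R2only'; auto. apply (B1 _ _ h).
      * intros x y; split.
        -- intros [hp [hx hy]]; split; [|auto].
           right; left; auto.
        -- intros [hp [hx hy]].
           have hx1 := R2only' _ _ (proj2 (B1 _ _ h)) hx.
           have hy1 := R2only' _ _ (proj2 (B1 _ _ h)) hy.
           split; auto. destruct hp as [hp|[hp|[hp _]]]; auto.
           ++ exfalso; eapply Hd; [apply (P1 _ _ hp)|apply (B1 _ _ hy1)].
           ++ exfalso; eapply Hd; [apply hp|apply (B1 _ _ hx1)].
  - intros x y x' y' [hp|[hp|[hx0 hy0]]] hx hy.
    + have hx1 := R1only _ _ (proj1 (P1 _ _ hp)) hx.
      have hy1 := R1only _ _ (proj2 (P1 _ _ hp)) hy.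
      destruct (A7 _ _ _ _ hp hx1 hy1); auto.
    + have hx1 := R2only _ _ (proj1 (P2 _ _ hp)) hx.
      have hy1 := R2only _ _ (proj2 (P2 _ _ hp)) hy.
      destruct (B7 _ _ _ _ hp hx1 hy1); auto.
    + have hx1 := R1only _ _ hx0 hx. have hy1 := R2only _ _ hy0 hy.
      right; right; right; split; [apply (A1 _ _ hx1)|apply (B1 _ _ hy1)].
  - intros x y x' y' hx hy [hp|[hp|[hx' hy']]].
    + have hx1 := R1only' _ _ (proj1 (P1' _ _ hp)) hx.
      have hy1 := R1only' _ _ (proj2 (P1' _ _ hp)) hy.
      left; eauto.
    + have hx1 := R2only' _ _ (proj1 (P2' _ _ hp)) hx.
      have hy1 := R2only' _ _ (proj2 (P2' _ _ hp)) hy.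
      right; left; eauto.
    + have hx1 := R1only' _ _ hx' hx. have hy1 := R2only' _ _ hy' hy.
      right; right; split; [apply (A1 _ _ hx1)|apply (B1 _ _ hy1)].
Qed.

End S2.

Section S3.
Context (Val Loc Method : Type) (T : nat) (Stamp : Type).
Context (L : Library Val Loc Method T Stamp) (I : Impl Val Method T).
Notation PE := (PExec Val Method T).
Notation Ev := (Event Val Method T).
Notation LM e := (lM L (ev_meth e)).
Hypothesis WD : forall t m vs, lM L m ->
  (forall v k (G : PE), sem t (I t m vs) v k G -> k = 0) /\
  (forall v (G : PE), sem t (I t m vs) v 0 G -> exists e, pE G e).

Lemma dec_loop t (p1 : SeqProg Val Method) v k (Gs : nat -> PE) j n0
  (IH : forall v k (G : PE) n0, sem t (trans I L t p1) v k G ->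
        exists G' R n1, n0 <= n1 /\ sem t p1 v k G' /\ Abs L I t G G' R n0 n1) :
  (forall i, i < j -> exists v', sem t (trans I L t p1) v' 0 (Gs i)) ->
  sem t (trans I L t p1) v k.+1 (Gs j) ->
  (forall i i', i <= j -> i' <= j -> i <> i' -> disjointE (pE (Gs i)) (pE (Gs i'))) ->
  forall j', j' <= j -> exists (Gs' : nat -> PE) R n1, n0 <= n1 /\
    (forall i, i <= j' -> (i < j -> exists v', sem t p1 v' 0 (Gs' i)) /\
                          (i = j -> sem t p1 v k.+1 (Gs' i))) /\
    (forall i i', i <= j' -> i' <= j' -> i <> i' -> disjointE (pE (Gs' i)) (pE (Gs' i'))) /\
    Abs L I t (seqn Gs j') (seqn Gs' j') R n0 n1.
Proof.
  intros HA HB HC.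
  have Hdec : forall i n, i <= j -> exists H R n1, n <= n1 /\
       (i < j -> exists v', sem t p1 v' 0 H) /\ (i = j -> sem t p1 v k.+1 H) /\
       Abs L I t (Gs i) H R n n1 /\ po_in H.
  { intros i n Hi. destruct (leqP j i) as [h|h].
    - have Ei : i = j by lia. subst i.
      destruct (IH _ _ _ n HB) as [H [R [n1 [? [S Ab]]]]].
      exists H, R, n1; split; [auto|split; [intros; lia|split; [auto|split; [auto|]]]].
      eapply sem_po_in; eauto.
    - destruct (HA i h) as [v' Hv'].
      destruct (IH _ _ _ n Hv') as [H [R [n1 [? [S Ab]]]]].
      exists H, R, n1; split; [auto|split; [eauto|split; [intros; lia|split; [auto|]]]].
      eapply sem_po_in; eauto. }
  have PoGs : forall i, i <= j -> po_in (Gs i).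
  { intros i Hi. destruct (leqP j i) as [h|h].
    - have Ei : i = j by lia. subst i. eapply sem_po_in; eauto.
    - destruct (HA i h) as [v' Hv']. eapply sem_po_in; eauto. }
  induction j' as [|j' IHj]; intros Hj.
  - destruct (Hdec 0 n0 Hj) as [H [R [n1 [h1 [h2 [h3 [h4 h5]]]]]]].
    exists (fun _ => H), R, n1; split; [auto|split; [|split]].
    + intros i Hi; have Ei : i = 0 by lia. subst i; auto.
    + intros i i' Hi Hi' Hne; exfalso; lia.
    + simpl; auto.
  - destruct (IHj (ltnW Hj)) as [Gs' [R [n1 [Hn [S1 [D1 Ab1]]]]]].
    destruct (Hdec j'.+1 n1 Hj) as [H [R2 [n2 [h1 [h2 [h3 [h4 h5]]]]]]].
    have Po1 : po_in (seqn Gs j') by apply seqn_po_in; intros; apply PoGs; lia.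
    have Po1' : po_in (seqn Gs' j').
    { apply seqn_po_in; intros i Hi. destruct (S1 i Hi) as [s1 s2].
      destruct (classic (i < j)) as [h|h]; last first.
      - have Ei : i = j by lia. eapply sem_po_in; eauto.
      - destruct (s1 h) as [v' Hv']; eapply sem_po_in; eauto. }
    have Dd : disjointE (pE (seqn Gs j')) (pE (Gs j'.+1)).
    { intros e he1 he2. destruct (proj1 (seqn_E _ _ _) he1) as [i [Hi He]].
      eapply (HC i j'.+1); eauto; lia. }
    destruct (abs_seq Hn h1 Ab1 h4 Dd Po1 (PoGs _ Hj) Po1' h5) as [D' Ab].
    exists (fun i => if i == j'.+1 then H else Gs' i), (fun e e' => R e e' \/ R2 e e'), n2.
    have Eq : seqn (fun i => if i == j'.+1 then H else Gs' i) j' = seqn Gs' j'.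
    { apply seqn_ext; intros i Hi. have -> : (i == j'.+1) = false by apply/eqP; lia. auto. }
    split; [lia|split; [|split]].
    + intros i Hi. destruct (eqVneq i j'.+1) as [E|E].
      * subst i. split; auto.
      * apply S1; lia.
    + intros i i' Hi Hi' Hne. destruct (eqVneq i j'.+1) as [E|E]; destruct (eqVneq i' j'.+1) as [E'|E'].
      * subst; exfalso; auto.
      * intros e he1 he2. eapply D'; [|exact he1]. apply seqn_E; exists i'; split; [lia|auto].
      * intros e he1 he2. eapply D'; [|exact he2]. apply seqn_E; exists i; split; [lia|auto].
      * apply D1; lia.
    + simpl. rewrite Eq eqxx. exact Ab.
Qed.

End S3.

Section S4.
Context (Val Loc Method : Type) (T : nat) (Stamp : Type).
Context (L : Library Val Loc Method T Stamp) (I : Impl Val Method T).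
Notation PE := (PExec Val Method T).
Notation Ev := (Event Val Method T).
Notation LM e := (lM L (ev_meth e)).
Hypothesis WD : forall t m vs, lM L m ->
  (forall v k (G : PE), sem t (I t m vs) v k G -> k = 0) /\
  (forall v (G : PE), sem t (I t m vs) v 0 G -> exists e, pE G e).

Lemma dec p : forall t v k (G : PE) n0, sem t (trans I L t p) v k G ->
  exists G' R n1, n0 <= n1 /\ sem t p v k G' /\ Abs L I t G G' R n0 n1.
Proof.
  induction p as [v0|m vs|p1 IH1 f IHf|p1 IH1|kk v0]; intros t v k G n0 Hs.
  - exists G, (fun e e' => pE G e /\ e' = e), n0; split; [auto|split; [exact Hs|]].
    apply abs_id. intros e he; destruct Hs as [_ [_ [Hq _]]]; destruct (proj1 (Hq e) he).
  - simpl in Hs. destruct (excluded_middle_informative (lM L m)) as [hL|hL].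
    + destruct (WD t vs hL) as [W1 W2]. have Hk := W1 _ _ _ Hs. subst k.
      set ev := mkEv t n0 m vs v.
      exists (singleG ev), (fun x e' => pE G x /\ e' = ev), n0.+1.
      split; [lia|split; [split; [auto|exists n0; apply peq_refl]|]].
      have Hpo := sem_po_in Hs.
      split; simpl.
      * intros e e' [h1 h2]; auto.
      * intros e h; exists ev; auto.
      * intros e e1 e2 [_ h1] [_ h2]; subst; auto.
      * intros e' h; destruct (W2 _ _ Hs) as [e he]; exists e; auto.
      * intros e e' [_ h] h'; subst; exfalso; apply h'; exact hL.
      * intros e e' [h1 h2] _; subst e'; simpl; split; [auto|split; [lia|]].
        eapply sem_peq; [|exact Hs]. split; simpl; [intros; tauto|].
        intros x y; split; [intros h; destruct (Hpo _ _ h); tauto|tauto].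
      * intros x y x' y' _ [_ h1] [_ h2]; subst; auto.
      * intros x y x' y' _ _ [].
    + exists G, (fun e e' => pE G e /\ e' = e), n0; split; [auto|split; [exact Hs|]].
      apply abs_id. intros e he; destruct Hs as [_ [iota [Hq _]]].
      rewrite (proj1 (Hq e) he); simpl; exact hL.
  - simpl in Hs. destruct Hs as [[v1 [G1 [G2 [A [B [C D]]]]]]|[A B]].
    + destruct (IH1 _ _ _ _ n0 A) as [G1' [R1 [n1 [Hn1 [S1 Ab1]]]]].
      destruct (IHf v1 _ _ _ _ n1 B) as [G2' [R2 [n2 [Hn2 [S2 Ab2]]]]].
      destruct (abs_seq Hn1 Hn2 Ab1 Ab2 C (sem_po_in A) (sem_po_in B) (sem_po_in S1) (sem_po_in S2))
        as [D' Ab].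
      exists (seqG G1' G2'), (fun e e' => R1 e e' \/ R2 e e'), n2.
      split; [lia|split].
      * left; exists v1, G1', G2'; repeat split; auto; intros; tauto.
      * eapply abs_peq_l; [apply peq_sym; exact D|exact Ab].
    + destruct (IH1 _ _ _ _ n0 A) as [G' [R [n1 [Hn1 [S1 Ab1]]]]].
      exists G', R, n1; split; [auto|split; [right; split; auto|auto]].
  - simpl in Hs. destruct Hs as [j [Gs [A [B [C D]]]]].
    have IH : forall v k (G : PE) n0, sem t (trans I L t p1) v k G ->
        exists G' R n1, n0 <= n1 /\ sem t p1 v k G' /\ Abs L I t G G' R n0 n1.
    { intros; eapply IH1; eauto. }
    destruct (@dec_loop _ _ _ _ _ L I t p1 v k Gs j n0 IH A B C j (leqnn j)) as [Gs' [R [n1 [Hn [S1 [D1 Ab]]]]]].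
    exists (seqn Gs' j), R, n1; split; [auto|split].
    + exists j, Gs'; split; [|split; [|split]].
      * intros i Hi; apply (S1 i (ltnW Hi)); auto.
      * apply (S1 j (leqnn _)); auto.
      * auto.
      * apply peq_refl.
    + eapply abs_peq_l; [apply peq_sym; exact D|exact Ab].
  - exists G, (fun e e' => pE G e /\ e' = e), n0; split; [auto|split; [exact Hs|]].
    apply abs_id. intros e he; destruct Hs as [_ [_ [Hq _]]]; destruct (proj1 (Hq e) he).
Qed.

End S4.

Section S5.
Context (Val Loc Method : Type) (T : nat) (Stamp : Type).
Context (L : Library Val Loc Method T Stamp) (I : Impl Val Method T).
Notation PE := (PExec Val Method T).
Notation Ev := (Event Val Method T).
Notation LM e := (lM L (ev_meth e)).
Hypothesis WD : forall t m vs, lM L m ->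
  (forall v k (G : PE), sem t (I t m vs) v k G -> k = 0) /\
  (forall v (G : PE), sem t (I t m vs) v 0 G -> exists e, pE G e).

Record GAbs (G G' : PE) (R : Ev -> Ev -> Prop) : Prop := {
  ga_dom : forall e e', R e e' -> pE G e /\ pE G' e';
  ga_tot : forall e, pE G e -> exists e', R e e';
  ga_fun : forall e e1 e2, R e e1 -> R e e2 -> e1 = e2;
  ga_sur : forall e', pE G' e' -> exists e, R e e';
  ga_cli : forall e e', R e e' -> ~ LM e' -> e' = e;
  ga_imp : forall e e', R e e' -> LM e' -> ev_tid e' = ev_tid e /\
     sem (ev_tid e') (I (ev_tid e') (ev_meth e') (ev_args e')) (ev_out e') 0 (restrictG G (fun x => R x e'));
  ga_po1 : forall x y x' y', ppo G x y -> R x x' -> R y y' -> x' = y' \/ ppo G' x' y';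
  ga_po2 : forall x y x' y', R x x' -> R y y' -> ppo G' x' y' -> ppo G x y;
  ga_poin : po_in G' }.

Lemma gabs_peq_l G H G' R : peq G H -> GAbs G G' R -> GAbs H G' R.
Proof.
  intros Hq [A1 A2 A3 A4 A5 A6 A7 A8 A9]; have [Q1 Q2] := Hq; split; auto.
  - intros e e' h; rewrite -Q1; auto.
  - intros e h; apply A2; rewrite Q1; auto.
  - intros e e' h1 h2; destruct (A6 e e' h1 h2) as [? S]; split; auto.
    eapply sem_peq; [|exact S]. apply restrictG_peq; auto. intro; tauto.
  - intros x y x' y' h; apply A7; apply Q2; auto.
  - intros; apply Q2; eauto.
Qed.

Lemma dec_conc (p : ConcProg Val Method T) vs (G : PE) :
  sem_conc (transC I L p) vs G -> exists G' R, sem_conc p vs G' /\ GAbs G G' R.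
Proof.
  intros [Gs [HS [HD HQ]]].
  have H : forall t, exists x : PE * (Ev -> Ev -> Prop),
      sem t (p t) (vs t) 0 x.1 /\ exists n1, Abs L I t (Gs t) x.1 x.2 0 n1.
  { intro t. destruct (dec WD 0 (HS t)) as [G' [R [n1 [_ [S Ab]]]]].
    exists (G', R); eauto. }
  pose F t := proj1_sig (constructive_indefinite_description _ (H t)).
  have FS : forall t, sem t (p t) (vs t) 0 (F t).1 /\ exists n1, Abs L I t (Gs t) (F t).1 (F t).2 0 n1.
  { intro t; exact (proj2_sig (constructive_indefinite_description _ (H t))). }
  have Rtid : forall t e e', (F t).2 e e' -> ev_tid e = t /\ ev_tid e' = t.
  { intros t e e' h. destruct (FS t) as [S [n1 Ab]].
    have T1 := sem_tid (HS t) (proj1 (ab_dom Ab h)). split; auto.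
    destruct (classic (LM e')) as [hL|hL].
    - apply (ab_imp Ab h hL).
    - rewrite (ab_cli Ab h hL); auto. }
  have G'tid : forall t e', pE (F t).1 e' -> ev_tid e' = t.
  { intros t e' h. destruct (FS t) as [S [n1 Ab]]. destruct (ab_sur Ab h) as [e he].
    apply (Rtid _ _ _ he). }
  have Gtid : forall t e, pE (Gs t) e -> ev_tid e = t.
  { intros t e h. apply (sem_tid (HS t) h). }
  exists (parG (fun t => (F t).1)), (fun e e' => exists t, (F t).2 e e').
  split.
  { exists (fun t => (F t).1); split; [intro t; apply (FS t)|split; [|apply peq_refl]].
    intros t t' hne e h1 h2. apply hne. rewrite -(G'tid _ _ h1). apply G'tid; auto. }
  eapply gabs_peq_l; [apply peq_sym; exact HQ|].
  split; simpl.
  - intros e e' [t h]. destruct (FS t) as [S [n1 Ab]]. destruct (ab_dom Ab h); eauto.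
  - intros e [t h]. destruct (FS t) as [S [n1 Ab]]. destruct (ab_tot Ab h); eauto.
  - intros e e1 e2 [t1 h1] [t2 h2].
    have E : t1 = t2 by rewrite -(proj1 (Rtid _ _ _ h1)); apply (Rtid _ _ _ h2).
    subst t2. destruct (FS t1) as [S [n1 Ab]]. apply (ab_fun Ab h1 h2).
  - intros e' [t h]. destruct (FS t) as [S [n1 Ab]]. destruct (ab_sur Ab h); eauto.
  - intros e e' [t h]. destruct (FS t) as [S [n1 Ab]]. apply (ab_cli Ab h).
  - intros e e' [t h] hL. destruct (FS t) as [S [n1 Ab]].
    destruct (ab_imp Ab h hL) as [Et [_ Sm]].
    have Et' := proj1 (Rtid _ _ _ h). rewrite Et Et'; split; auto.
    eapply sem_peq; [|exact Sm]. split; simpl.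
    + intro x; split; [eauto|]. intros [t1 h1].
      have E : t1 = t by rewrite -(proj2 (Rtid _ _ _ h1)); apply (proj2 (Rtid _ _ _ h)).
      subst; auto.
    + intros x y; split.
      * intros [hp [hx hy]]; split; [|split]; eauto.
      * intros [[t1 hp] [[t2 hx] [t3 hy]]].
        have Po := sem_po_in (HS t1) hp.
        have E1 : t2 = t by rewrite -(proj2 (Rtid _ _ _ hx)); apply (proj2 (Rtid _ _ _ h)).
        have E2 : t3 = t by rewrite -(proj2 (Rtid _ _ _ hy)); apply (proj2 (Rtid _ _ _ h)).
        subst t2 t3.
        have E3 : t1 = t by rewrite -(Gtid _ _ (proj1 Po)); apply (proj1 (Rtid _ _ _ hx)).
        subst; auto.
  - intros x y x' y' [t hp] [t1 hx] [t2 hy].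
    have Po := sem_po_in (HS t) hp.
    have E1 : t1 = t by rewrite -(proj1 (Rtid _ _ _ hx)); apply (Gtid _ _ (proj1 Po)).
    have E2 : t2 = t by rewrite -(proj1 (Rtid _ _ _ hy)); apply (Gtid _ _ (proj2 Po)).
    subst t1 t2. destruct (FS t) as [S [n1 Ab]].
    destruct (ab_po1 Ab hp hx hy); eauto.
  - intros x y x' y' [t1 hx] [t2 hy] [t hp].
    have Po := sem_po_in (proj1 (FS t)) hp.
    have E1 : t1 = t by rewrite -(proj2 (Rtid _ _ _ hx)); apply (G'tid _ _ (proj1 Po)).
    have E2 : t2 = t by rewrite -(proj2 (Rtid _ _ _ hy)); apply (G'tid _ _ (proj2 Po)).
    subst t1 t2. destruct (FS t) as [S [n1 Ab]]. exists t; apply (ab_po2 Ab hx hy hp).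
  - intros x y [t hp]. have Po := sem_po_in (proj1 (FS t)) hp. split; exists t; tauto.
Qed.

End S5.

Section S6.
Context (Val Loc Method : Type) (T : nat) (Stamp : Type).
Notation PE := (PExec Val Method T).
Notation Ev := (Event Val Method T).
Notation Ex := (Exec Val Method T Stamp).

Ltac ext := repeat (apply functional_extensionality; intro); apply propositional_extensionality.

Lemma restrict_restrict (X : Ex) P Q :
  restrict (restrict X P) Q = restrict X (fun e => P e /\ Q e).
Proof. unfold restrict; simpl; f_equal; ext; simpl; tauto. Qed.

Lemma restrict_ext (X : Ex) (P Q : Ev -> Prop) : (forall e, xE X e -> (P e <-> Q e)) ->
  restrict X P = restrict X Q.
Proof.
  intros H; unfold restrict; simpl; f_equal; ext; simpl.
  all: firstorder.
Qed.

Context (to : Stamp -> Stamp -> Prop).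

Lemma restrict_hb (X : Ex) P :
  incl_rel (clos_trans _ (union_rel (xppo to X) (xso X))) (xhb X) ->
  (forall x y z, xhb X x y -> xhb X y z -> xhb X x z) ->
  incl_rel (clos_trans _ (union_rel (xppo to (restrict X P)) (xso (restrict X P)))) (xhb (restrict X P)).
Proof.
  intros H1 H2 x y h; induction h as [x y h|x y z _ IH1 _ IH2].
  - destruct h as [[hp [hs1 [hs2 ht]]]|[hs [hx hy]]]; simpl in *.
    + destruct hp as [hp [hx hy]]; split; auto; apply H1; apply t_step; left.
      split; [auto|split; [tauto|split; [tauto|auto]]].
    + split; auto; apply H1; apply t_step; right; auto.
  - destruct IH1 as [h1 [? ?]]; destruct IH2 as [h2 [? ?]]; split; eauto.
Qed.

Lemma consistent_restrict (Lam : LibSet Val Loc Method T Stamp) (X : Ex) P :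
  consistent to Lam X ->
  (forall L0, Lam L0 -> lC L0 (restrict (restrict X P) (fun e => lM L0 (ev_meth e)))) ->
  consistent to Lam (restrict X P).
Proof.
  intros [[[Q1 [Q2 [Q3 [Q4 Q5]]]] [[S1 S2] [So Hb]]] [H1 [H2 [H3 [H4 [H5 H6]]]]]] HL.
  split; [|split; [apply restrict_hb; auto|split; [|split; [|split; [|split]]]]]; simpl.
  - split; [split; [|split; [|split; [|split]]]|split; [split|split]]; simpl.
    + intros x y [_ [? ?]]; auto.
    + intros x y [h _]; apply (Q2 _ _ h).
    + intros x [h _]; apply (Q3 _ h).
    + intros x y z [h1 [? ?]] [h2 [? ?]]; split; [eapply Q4; eauto|tauto].
    + intros x y hx hy ht hne. destruct (Q5 x y (proj1 hx) (proj1 hy) ht hne); tauto.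
    + intros e [he hP]; destruct (S1 e he) as [a ha]; exists a; split; [exact ha|split; assumption].
    + intros e a [_ h]; exact h.
    + intros x y [h [hx hy]]; destruct (So x y h) as [[h1 h2] [h3 h4]]; repeat split; tauto.
    + intros x y [h [hx hy]]; destruct (Hb x y h) as [[h1 h2] [h3 h4]]; repeat split; tauto.
  - intros x [h _]; apply (H2 x h).
  - intros x y z [h1 [? ?]] [h2 [? ?]]; split; [eapply H3; eauto|tauto].
  - intros e [h _]; auto.
  - intros x y [h _]; auto.
  - auto.
Qed.

End S6.

Section S7.
Context (Val Loc Method : Type) (T : nat) (Stamp : Type) (to : Stamp -> Stamp -> Prop).
Context (L : Library Val Loc Method T Stamp) (I : Impl Val Method T).
Notation PE := (PExec Val Method T).
Notation Ev := (Event Val Method T).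
Notation Ex := (Exec Val Method T Stamp).
Notation LM e := (lM L (ev_meth e)).

Lemma decomp_lib (L0 : Library Val Loc Method T Stamp) (X : Ex) (P : Ev -> Prop) :
  is_library to L0 -> lC L0 (restrict X (fun e => lM L0 (ev_meth e))) ->
  (forall l, locSetL L0 (fun e => xE X e /\ P e) l -> locSetL L0 (fun e => xE X e /\ ~ P e) l -> False) ->
  lC L0 (restrict X (fun e => lM L0 (ev_meth e) /\ P e)).
Proof.
  intros [_ Dc] H Hl.
  have Hr := Dc _ (fun e => (xE X e /\ lM L0 (ev_meth e)) /\ P e)
                (fun e => (xE X e /\ lM L0 (ev_meth e)) /\ ~ P e) H.
  have Hr' : lC L0 (restrict (restrict X (fun e => lM L0 (ev_meth e)))
                  (fun e => (xE X e /\ lM L0 (ev_meth e)) /\ P e)).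
  { apply Hr.
    - simpl; intro e; destruct (classic (P e)); tauto.
    - intros e [[? ?] ?] [[? ?] ?]; tauto.
    - intros l [e [[[h1 h2] h3] h4]] [e' [[[h1' h2'] h3'] h4']].
      apply (Hl l); [exists e|exists e']; auto. }
  rewrite restrict_restrict in Hr'.
  erewrite restrict_ext; [apply Hr'|].
  simpl; intros e he; tauto.
Qed.

Lemma plain_restrictG (G : PE) Q : is_plain G -> is_plain (restrictG G (fun e => pE G e /\ Q e)).
Proof.
  intros [Q1 [Q2 [Q3 [Q4 Q5]]]]; split; [|split; [|split; [|split]]]; simpl.
  - intros x y [_ [? ?]]; auto.
  - intros x y [h _]; apply (Q2 _ _ h).
  - intros x [h _]; apply (Q3 _ h).
  - intros x y z [h1 [? ?]] [h2 [? ?]]; split; [eapply Q4; eauto|tauto].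
  - intros x y hx hy ht hne. destruct (Q5 x y (proj1 hx) (proj1 hy) ht hne); tauto.
Qed.

Lemma gabs_tid (G G' : PE) R : GAbs L I G G' R -> forall e e', R e e' -> ev_tid e' = ev_tid e.
Proof.
  intros GA e e' h. destruct (classic (LM e')) as [hL|hL].
  - apply (ga_imp GA h hL).
  - rewrite (ga_cli GA h hL); auto.
Qed.

Lemma gabs_plain (G G' : PE) R : is_plain G -> GAbs L I G G' R -> is_plain G'.
Proof.
  intros [Q1 [Q2 [Q3 [Q4 Q5]]]] GA.
  have Tid := gabs_tid GA.
  have Pre : forall x' y', ppo G' x' y' -> exists x y, R x x' /\ R y y' /\ ppo G x y.
  { intros x' y' h. destruct (ga_poin GA h) as [hx hy].
    destruct (ga_sur GA hx) as [x rx]; destruct (ga_sur GA hy) as [y ry].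
    exists x, y; split; [auto|split; [auto|eapply ga_po2; eauto]]. }
  split; [|split; [|split; [|split]]].
  - apply (ga_poin GA).
  - intros x' y' h. destruct (Pre _ _ h) as [x [y [rx [ry hp]]]].
    rewrite (Tid _ _ rx) (Tid _ _ ry). apply (Q2 _ _ hp).
  - intros x' h. destruct (Pre _ _ h) as [x [y [rx [ry hp]]]].
    apply (Q3 x). apply (ga_po2 GA rx rx). have E := ga_fun GA. 
    destruct (ga_poin GA h) as [hx _]. exact h.
  - intros x' y' z' h1 h2. destruct (Pre _ _ h1) as [x [y [rx [ry hp]]]].
    destruct (ga_poin GA h2) as [_ hz]. destruct (ga_sur GA hz) as [z rz].
    have hp2 := ga_po2 GA ry rz h2.
    destruct (ga_po1 GA (Q4 _ _ _ hp hp2) rx rz) as [E|E]; auto.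
    subst z'. exfalso. apply (Q3 x). apply (Q4 _ _ _ hp). eapply ga_po2; eauto.
  - intros x' y' hx hy ht hne.
    destruct (ga_sur GA hx) as [x rx]; destruct (ga_sur GA hy) as [y ry].
    have hxy : x <> y by intro E; subst; apply hne; eapply ga_fun; eauto.
    have hxG := proj1 (ga_dom GA rx); have hyG := proj1 (ga_dom GA ry).
    rewrite (Tid _ _ rx) (Tid _ _ ry) in ht.
    destruct (Q5 _ _ hxG hyG ht hxy) as [h|h].
    + destruct (ga_po1 GA h rx ry); auto; exfalso; auto.
    + destruct (ga_po1 GA h ry rx); auto; exfalso; auto.
Qed.

End S7.

Section S7b.
Context (Val Method : Type) (T : nat) (Stamp : Type).
Notation Ex := (Exec Val Method T Stamp).
Lemma hb_rt (X : Ex) : (forall x y z, xhb X x y -> xhb X y z -> xhb X x z) ->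
  forall u v w, xhb X u v -> clos_refl_trans _ (xhb X) v w -> xhb X u w.
Proof.
  intros Htr u v w h1 h2. apply clos_rt_rt1n in h2. induction h2; eauto.
Qed.
Lemma rt_hb (X : Ex) : (forall x y z, xhb X x y -> xhb X y z -> xhb X x z) ->
  forall u v w, clos_refl_trans _ (xhb X) u v -> xhb X v w -> xhb X u w.
Proof.
  intros Htr u v w h1 h2. apply clos_rt_rtn1 in h1. induction h1; eauto.
Qed.
Lemma rt_restrict (X : Ex) P u v : clos_refl_trans _ (xhb (restrict X P)) u v -> clos_refl_trans _ (xhb X) u v.
Proof.
  intro h; induction h as [x y [h _]| |]; [apply rt_step; auto|apply rt_refl|eapply rt_trans; eauto].
Qed.
End S7b.

Theorem mainTheorem2 (Val Loc Method : Type) (T : nat) (Stamp : Type)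
    (to : Stamp -> Stamp -> Prop)
    (Lam : LibSet Val Loc Method T Stamp) (L : Library Val Loc Method T Stamp)
    (I : Impl Val Method T) :
  (forall L', Lam L' -> is_library to L') ->
  is_library to L ->
  pairwise_compatible Lam ->
  (forall L', Lam L' -> compatible L L') ->
  ~ Lam L ->
  well_defined I L Lam ->
  locally_sound to I L Lam ->
  sound to I L Lam.
Proof.
  intros HLam HL Hpc Hcomp HnL [_ HWD] Hls.
  intros p Hcalls Hloc vs [X [HX HS]].
  have WD : forall t m vs, lM L m ->
    (forall v k (G : PExec Val Method T), sem t (I t m vs) v k G -> k = 0) /\
    (forall v (G : PExec Val Method T), sem t (I t m vs) v 0 G -> exists e, pE G e).
  { intros t m vs0 h; destruct (HWD t m vs0 h) as [_ [A B]]; auto. }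
  destruct (dec_conc WD HS) as [[E' po'] [R [HS' GA]]].
  have HX0 := HX.
  destruct HX0 as [[HXpl [[HXst1 HXst2] [HXsoin HXhbin]]] [HXhb [HXirr [HXtr [HXm [HXso HXlib]]]]]].
  set G' := {| pE := E'; ppo := po' |} in GA HS'.
  have NLimpl : forall e e', R e e' -> lM L (ev_meth e') -> ~ lM L (ev_meth e).
  { intros e e' h hL hL'. destruct (ga_imp GA h hL) as [_ Sm].
    destruct (HWD (ev_tid e') (ev_meth e') (ev_args e') hL) as [Hc _].
    have := calls_sem Hc Sm (e:=e) h. intros [L1 [HL1 HM]].
    exact (Hcomp L1 HL1 _ hL' HM). }
  have NLX : forall e, xE X e -> ~ lM L (ev_meth e).
  { intros e he. destruct (ga_tot GA he) as [e' h].
    destruct (classic (lM L (ev_meth e'))) as [hL|hL]; [eapply NLimpl; eauto|].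
    rewrite -(ga_cli GA h hL); auto. }
  pose f := fun e => epsilon (inhabits e) (fun e' => R e e').
  have fspec : forall e, xE X e -> R e (f e).
  { intros e he. apply (epsilon_spec (inhabits e) (fun e' => R e e')). apply (ga_tot GA he). }
  have Rf : forall e e', R e e' -> f e = e'.
  { intros e e' h. eapply (ga_fun GA); [apply fspec; apply (ga_dom GA h)|exact h]. }
  pose impl := fun e => exists e', R e e' /\ lM L (ev_meth e').
  have clX : forall e, E' e -> ~ lM L (ev_meth e) -> xE X e /\ R e e.
  { intros e he hL. destruct (ga_sur GA he) as [e0 h0].
    have E0 := ga_cli GA h0 hL. subst e0. split; auto. apply (ga_dom GA h0). }
  have Xcl : forall e, xE X e -> ~ impl e -> E' e /\ ~ lM L (ev_meth e).
  { intros e he hi. destruct (ga_tot GA he) as [e' h].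
    destruct (classic (lM L (ev_meth e'))) as [hL|hL]; [exfalso; apply hi; exists e'; auto|].
    have E0 := ga_cli GA h hL. subst e'. split; auto. apply (ga_dom GA h). }
  have PlG' : is_plain G' by apply (gabs_plain HXpl GA).
  have Hpoirr : forall x, ~ xpo X x x by apply HXpl.
  pose EL := fun e => E' e /\ lM L (ev_meth e).
  pose G'L := restrictG G' EL.
  pose Xi := restrict X impl.
  have LocI : forall L0 e l, Lam L0 -> xE X e -> impl e -> locL L0 e l -> locImpl I L Lam l.
  { intros L0 e l HL0 he [e' [h hL]] hl. destruct (ga_imp GA h hL) as [_ Sm].
    exists (ev_tid e'), (ev_meth e'), (ev_args e'), (ev_out e'), 0,
      (restrictG (xplain X) (fun x => R x e')), e.
    split; [auto|split; [exact Sm|split; [exact h|exists L0; auto]]]. }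
  have LocP : forall L0 e l, Lam L0 -> xE X e -> ~ impl e -> locL L0 e l ->
       locProg (add_lib Lam L) p l.
  { intros L0 e l HL0 he hi hl. exists vs, G', e. split; [exact HS'|split].
    - apply (proj1 (Xcl e he hi)).
    - exists L0; split; [left|]; auto. }
  have HXi : consistent to Lam Xi.
  { apply consistent_restrict; auto. intros L0 HL0.
    rewrite restrict_restrict.
    have -> : restrict X (fun e => impl e /\ lM L0 (ev_meth e)) =
              restrict X (fun e => lM L0 (ev_meth e) /\ impl e).
    { apply restrict_ext; intros; tauto. }
    apply (decomp_lib (to:=to)); auto.
    intros l [e [[he hi] hl]] [e2 [[he2 hi2] hl2]].
    apply (Hloc l); [exact (LocI L0 e l HL0 he hi hl)|exact (LocP L0 e2 l HL0 he2 hi2 hl2)]. }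
  have implEL : forall e, xE X e -> impl e -> EL (f e).
  { intros e he [e1 [h hL]]. rewrite (Rf _ _ h). split; [apply (ga_dom GA h)|auto]. }
  have HAbs : abstracts I L (xplain Xi) G'L f.
  { split; [|split; [|split; [|split; [|split; [|split]]]]]; simpl.
    - intros e [he hi]; apply implEL; auto.
    - intros e' [he' hL]; destruct (ga_sur GA he') as [e h]; exists e.
      split; [split; [apply (ga_dom GA h)|exists e'; auto]|apply Rf; auto].
    - intros e [he _]; apply NLX; auto.
    - intros e' [_ hL]; auto.
    - intros e1 e2 [hp [[h1 i1] [h2 i2]]].
      destruct (ga_po1 GA hp (fspec _ h1) (fspec _ h2)) as [E|E].
      + rewrite E; apply rt_refl.
      + apply rt_step; split; [exact E|split; apply implEL; auto].
    - intros e1 e2 [h1 i1] [h2 i2] [hp _].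
      split; [apply (ga_po2 GA (fspec _ h1) (fspec _ h2) hp)|split; split; auto].
    - intros e' [he' hL]. destruct (ga_sur GA he') as [e0 h0].
      destruct (ga_imp GA h0 hL) as [_ Sm].
      have Aiff : forall x, R x e' <-> (xE X x /\ impl x) /\ f x = e'.
      { intro x; split.
        - intro h; split; [split; [apply (ga_dom GA h)|exists e'; auto]|apply Rf; auto].
        - intros [[hx _] fx]; rewrite -fx; apply fspec; auto. }
      eapply sem_peq; [|exact Sm]. split; simpl.
      + exact Aiff.
      + intros x y; have := Aiff x; have := Aiff y; tauto. }
  destruct (Hls Xi G'L f HXi (plain_restrictG (fun e => lM L (ev_meth e)) PlG') HAbs)
    as [stmp' [so' [g [Hst' [Hso'in [Hgin [Hi [Hii Hiii]]]]]]]].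
  pose stmp2 := fun e a => (E' e /\ ~ lM L (ev_meth e) /\ xstmp X e a) \/
                           (E' e /\ lM L (ev_meth e) /\ stmp' e a).
  pose cl := fun e => E' e /\ ~ lM L (ev_meth e).
  pose so2 := fun x y : SEv Val Method T Stamp =>
     (xso X x y /\ cl (fst x) /\ cl (fst y)) \/ so' x y.
  pose h := fun x : SEv Val Method T Stamp =>
     if excluded_middle_informative (lM L (ev_meth (fst x))) then g x else x.
  pose hb2 := fun x y => subev E' stmp2 x /\ subev E' stmp2 y /\ xhb X (h x) (h y).
  have hL_eq : forall x, lM L (ev_meth (fst x)) -> h x = g x.
  { intros x hx; unfold h; destruct excluded_middle_informative; [reflexivity|contradiction]. }
  have hN_eq : forall x, ~ lM L (ev_meth (fst x)) -> h x = x.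
  { intros x hx; unfold h; destruct excluded_middle_informative; [contradiction|reflexivity]. }
  have stmpL : forall e a, stmp2 e a -> lM L (ev_meth e) -> stmp' e a /\ EL e.
  { intros e a [[? [? ?]]|[? [? ?]]] hL; [tauto|split; [auto|split; auto]]. }
  have stmpN : forall e a, stmp2 e a -> ~ lM L (ev_meth e) -> xstmp X e a /\ E' e.
  { intros e a [[? [? ?]]|[? [? ?]]] hL; [auto|tauto]. }
  have PX : forall e1 a1 e3 a3, xstmp X e1 a1 -> xstmp X e3 a3 -> xpo X e1 e3 -> to a1 a3 ->
      xhb X (e1, a1) (e3, a3).
  { intros e1 a1 e3 a3 s1 s3 hp ht. apply HXhb. apply t_step. left.
    split; [exact hp|split; [exact s1|split; [exact s3|exact ht]]]. }
  have SEi : forall e a, xSE Xi (e, a) -> xE X e /\ xstmp X e a.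
  { intros e a [[he _] [hs _]]; auto. }
  have hbrt := hb_rt HXtr. have rthb := rt_hb HXtr.
  have poE : forall x y, po' x y -> E' x /\ E' y by apply PlG'.
  have Sppo : forall x y, ppo_of to po' stmp2 x y -> xhb X (h x) (h y).
  { intros [e1 a1] [e2 a2] [hp [s1 [s2 ht]]]; simpl in *.
    destruct (poE _ _ hp) as [he1 he2].
    destruct (classic (lM L (ev_meth e1))) as [L1|L1];
    destruct (classic (lM L (ev_meth e2))) as [L2|L2];
    [rewrite (hL_eq (e1,a1) L1) (hL_eq (e2,a2) L2)
    |rewrite (hL_eq (e1,a1) L1) (hN_eq (e2,a2) L2)
    |rewrite (hN_eq (e1,a1) L1) (hL_eq (e2,a2) L2)
    |rewrite (hN_eq (e1,a1) L1) (hN_eq (e2,a2) L2)].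
    - destruct (g (e1, a1)) as [e a] eqn:Eg1. destruct (g (e2, a2)) as [e' a'] eqn:Eg2.
      destruct (stmpL _ _ s1 L1) as [s1' EL1]. destruct (stmpL _ _ s2 L2) as [s2' EL2].
      destruct (Hi e1 a1 e a (conj EL1 s1') Eg1) as [_ [_ H2]].
      destruct (H2 a2 ht) as [e3 [a3 [Se3 [fe3 [ht3 rt3]]]]].
      destruct (Hi e2 a2 e' a' (conj EL2 s2') Eg2) as [_ [H1 _]].
      destruct (H1 a3 ht3) as [e4 [a4 [Se4 [fe4 [ht4 rt4]]]]].
      destruct (SEi _ _ Se3) as [xe3 xs3]. destruct (SEi _ _ Se4) as [xe4 xs4].
      have r3 : R e3 e1 by rewrite -fe3; apply fspec.
      have r4 : R e4 e2 by rewrite -fe4; apply fspec.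
      eapply rthb; [apply (rt_restrict rt3)|].
      eapply hbrt; [|apply (rt_restrict rt4)].
      apply PX; auto. eapply (ga_po2 GA r3 r4); exact hp.
    - destruct (g (e1, a1)) as [e a] eqn:Eg1.
      destruct (stmpL _ _ s1 L1) as [s1' EL1]. destruct (stmpN _ _ s2 L2) as [s2' _].
      destruct (Hi e1 a1 e a (conj EL1 s1') Eg1) as [_ [_ H2]].
      destruct (H2 a2 ht) as [e3 [a3 [Se3 [fe3 [ht3 rt3]]]]].
      destruct (SEi _ _ Se3) as [xe3 xs3].
      have r3 : R e3 e1 by rewrite -fe3; apply fspec.
      have r2 : R e2 e2 by apply (clX _ he2 L2).
      eapply rthb; [apply (rt_restrict rt3)|].
      apply PX; auto. eapply (ga_po2 GA r3 r2); exact hp.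
    - destruct (g (e2, a2)) as [e' a'] eqn:Eg2.
      destruct (stmpN _ _ s1 L1) as [s1' _]. destruct (stmpL _ _ s2 L2) as [s2' EL2].
      destruct (Hi e2 a2 e' a' (conj EL2 s2') Eg2) as [_ [H1 _]].
      destruct (H1 a1 ht) as [e4 [a4 [Se4 [fe4 [ht4 rt4]]]]].
      destruct (SEi _ _ Se4) as [xe4 xs4].
      have r4 : R e4 e2 by rewrite -fe4; apply fspec.
      have r1 : R e1 e1 by apply (clX _ he1 L1).
      eapply hbrt; [|apply (rt_restrict rt4)].
      apply PX; auto. eapply (ga_po2 GA r1 r4); exact hp.
    - destruct (stmpN _ _ s1 L1) as [s1' _]. destruct (stmpN _ _ s2 L2) as [s2' _].
      have r1 : R e1 e1 by apply (clX _ he1 L1).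
      have r2 : R e2 e2 by apply (clX _ he2 L2).
      apply PX; auto. eapply (ga_po2 GA r1 r2); exact hp. }
  have Sso : forall x y, so2 x y -> xhb X (h x) (h y).
  { intros x y [[hs [c1 c2]]|hs].
    - rewrite (hN_eq x (proj2 c1)) (hN_eq y (proj2 c2)). apply HXhb; apply t_step; right; auto.
    - destruct (Hso'in x y hs) as [[[_ L1] _] [[_ L2] _]].
      rewrite (hL_eq x L1) (hL_eq y L2). apply (Hii x y hs). }
  have SEppo : forall x y, ppo_of to po' stmp2 x y -> subev E' stmp2 x /\ subev E' stmp2 y.
  { intros x y [hp [s1 [s2 _]]]. destruct (poE _ _ hp). split; split; auto. }
  have SEso : forall x y, so2 x y -> subev E' stmp2 x /\ subev E' stmp2 y.
  { intros x y [[hs [[c1 n1] [c2 n2]]]|hs].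
    - destruct (HXsoin x y hs) as [[_ s1] [_ s2]].
      split; split; auto; left; auto.
    - destruct (Hso'in x y hs) as [[[e1 L1] s1] [[e2 L2] s2]].
      split; split; auto; right; auto. }
  have hb2tr : forall x y z, hb2 x y -> hb2 y z -> hb2 x z.
  { intros x y z [a1 [a2 a3]] [b1 [b2 b3]]; split; [auto|split; [auto|eapply HXtr; eauto]]. }
  have CT : forall x y, clos_trans _ (union_rel (ppo_of to po' stmp2) so2) x y -> hb2 x y.
  { intros x y hct; induction hct as [x y [hp|hs]|x y z _ IH1 _ IH2].
    - destruct (SEppo _ _ hp); split; [auto|split; [auto|apply Sppo; auto]].
    - destruct (SEso _ _ hs); split; [auto|split; [auto|apply Sso; auto]].
    - eapply hb2tr; eauto. }
  pose X' := mkExec E' po' stmp2 so2 hb2.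
  exists X'. split; [|exact HS'].
  split; [|split; [|split; [|split; [|split; [|split]]]]].
  - split; [exact PlG'|split; [split|split]].
    + intros e he. destruct (classic (lM L (ev_meth e))) as [hL|hL].
      * destruct (proj1 Hst' e (conj he hL)) as [a ha]; exists a; right; auto.
      * destruct (clX e he hL) as [xe _]. destruct (HXst1 e xe) as [a ha]; exists a; left; auto.
    + intros e a [[? _]|[? _]]; auto.
    + exact SEso.
    + intros x y [? [? _]]; auto.
  - exact CT.
  - intros x [_ [_ hh]]; exact (HXirr _ hh).
  - exact hb2tr.
  - intros e he. destruct (classic (lM L (ev_meth e))) as [hL|hL].
    + exists L; split; [right|]; auto.
    + destruct (clX e he hL) as [xe _]. destruct (HXm e xe) as [L1 [HL1 hm]].
      exists L1; split; [left|]; auto.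
  - intros x y [[hs _]|hs].
    + destruct (HXso x y hs) as [L1 [HL1 hm]]; exists L1; split; [left|]; auto.
    + destruct (Hso'in x y hs) as [[[_ L1] _] [[_ L2] _]]. exists L; split; [right|]; auto.
  - intros L0 [HL0|E0]; last first.
    + subst L0.
      have Eq : restrict X' (fun e => lM L (ev_meth e)) =
         mkExec (pE G'L) (ppo G'L) stmp' so' (xhb (restrict X' (fun e => lM L (ev_meth e)))).
      { unfold restrict; simpl; f_equal.
        all: repeat (apply functional_extensionality; intro); apply propositional_extensionality.
        - split; [intros [s [he hL]]; apply (stmpL _ _ s hL)|].
          intro s. have [he hL] := proj2 Hst' _ _ s. split; [right; auto|auto].
        - split.
          + intros [[[hs [[_ n1] _]]|hs] [[_ l1] _]]; [contradiction|exact hs].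
          + intro hs. destruct (Hso'in x x0 hs) as [[[e1 L1] s1] [[e2 L2] s2]].
            split; [right; exact hs|auto]. }
      rewrite Eq. apply Hiii.
      * intros x y [[[e1 s1] [[e2 s2] hh]] [[_ L1] [_ L2]]].
        split; split; [split; auto|exact (proj1 (stmpL _ _ s1 L1))|split; auto|exact (proj1 (stmpL _ _ s2 L2))].
      * intros x y z [a1 [a2 a3]] [b1 [b2 b3]]; split; [eapply hb2tr; eauto|tauto].
      * intros x y hct; induction hct as [x y [hp|hs]|x y z _ IH1 _ IH2].
        -- destruct hp as [[hp [EL1 EL2]] [s1 [s2 ht]]].
           split; [apply CT; apply t_step; left|split; [exact EL1|exact EL2]].
           split; [exact hp|split; [right; split; [apply EL1|split; [apply EL1|exact s1]]|
                                     split; [right; split; [apply EL2|split; [apply EL2|exact s2]]|exact ht]]].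
        -- destruct (Hso'in x y hs) as [[EL1 s1] [EL2 s2]].
           split; [apply CT; apply t_step; right; right; exact hs|split; [exact EL1|exact EL2]].
        -- destruct IH1 as [i1 [? ?]]; destruct IH2 as [i2 [? ?]]; split; [eapply hb2tr; eauto|tauto].
      * intros x y [[[e1 s1] [[e2 s2] hh]] [[_ L1] [_ L2]]].
        have gx := Hgin x (conj (conj e1 L1) (proj1 (stmpL _ _ s1 L1))).
        have gy := Hgin y (conj (conj e2 L2) (proj1 (stmpL _ _ s2 L2))).
        split; [rewrite -(hL_eq x L1) -(hL_eq y L2); exact hh|split; [exact (proj1 gx)|exact (proj1 gy)]].
    + have NL0 : forall e : Event Val Method T, lM L0 (ev_meth e) -> ~ lM L (ev_meth e).
      { intros e h1 h2; exact (Hcomp L0 HL0 _ h2 h1). }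
      have YE : forall e : Event Val Method T, (E' e /\ lM L0 (ev_meth e)) <->
                          (xE X e /\ (lM L0 (ev_meth e) /\ ~ impl e)).
      { intro e; split.
        - intros [he hm]. destruct (clX e he (NL0 e hm)) as [xe re]. split; [auto|split; [auto|]].
          intros [e1 [h1 hL]]. have E1 := ga_fun GA re h1. subst e1. exact (NL0 e hm hL).
        - intros [xe [hm hi]]. split; [apply (Xcl e xe hi)|auto]. }
      have POcl : forall x y : Event Val Method T, E' x -> ~ lM L (ev_meth x) -> E' y -> ~ lM L (ev_meth y) ->
                    (po' x y <-> xpo X x y).
      { intros x y hx nx hy ny. destruct (clX x hx nx) as [xx rx]; destruct (clX y hy ny) as [xy ry].
        split; [intro hp; apply (ga_po2 GA rx ry hp)|intro hp].
        destruct (ga_po1 GA hp rx ry) as [E|E]; [subst; exfalso; exact (Hpoirr _ hp)|exact E]. }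
      have Hd : lC L0 (restrict X (fun e => lM L0 (ev_meth e) /\ ~ impl e)).
      { apply (decomp_lib (to:=to)); [apply HLam; auto|apply HXlib; auto|].
        intros l [e [[he hi] hl]] [e2 [[he2 hi2] hl2]].
        apply (Hloc l); [exact (LocI L0 e2 l HL0 he2 (NNPP _ hi2) hl2)|exact (LocP L0 e l HL0 he hi hl)]. }
      pose Y := restrict X (fun e => lM L0 (ev_meth e) /\ ~ impl e).
      have Eq : restrict X' (fun e => lM L0 (ev_meth e)) =
         mkExec (xE Y) (xpo Y) (xstmp Y) (xso Y) (xhb (restrict X' (fun e => lM L0 (ev_meth e)))).
      { unfold Y, restrict; simpl; f_equal.
        all: repeat (apply functional_extensionality; intro); apply propositional_extensionality.
        - exact (YE x).
        - split.
          + intros [hp [A B]].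
            split; [apply (POcl x x0 (proj1 A) (NL0 _ (proj2 A)) (proj1 B) (NL0 _ (proj2 B))); exact hp|].
            split; [apply YE; exact A|apply YE; exact B].
          + intros [hp [A B]]. apply YE in A. apply YE in B.
            split; [apply (POcl x x0 (proj1 A) (NL0 _ (proj2 A)) (proj1 B) (NL0 _ (proj2 B))); exact hp|].
            split; auto.
        - split.
          + intros [s [he hm]]. split; [exact (proj1 (stmpN _ _ s (NL0 _ hm)))|apply YE; auto].
          + intros [s A]. apply YE in A. destruct A as [he hm].
            split; [left; split; [auto|split; [exact (NL0 _ hm)|exact s]]|auto].
        - split.
          + intros [[[hs _]|hs] [A B]].
            * split; [exact hs|split; [apply YE; exact A|apply YE; exact B]].
            * destruct (Hso'in x x0 hs) as [[[_ L1] _] _].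
              exfalso; exact (NL0 _ (proj2 A) L1).
          + intros [hs [A B]]. apply YE in A. apply YE in B.
            split; [left; split; [exact hs|split; split; [apply A|apply (NL0 _ (proj2 A))|apply B|apply (NL0 _ (proj2 B))]]|].
            split; auto. }
      have RH := restrict_hb (X := X') (P := fun e => lM L0 (ev_meth e)) CT hb2tr.
      rewrite Eq in RH.
      rewrite Eq. apply (proj1 (HLam L0 HL0) Y); [exact Hd|exact RH|].
      intros x y [[[e1 s1] [[e2 s2] hh]] [[_ m1] [_ m2]]].
      rewrite (hN_eq x (NL0 _ m1)) (hN_eq y (NL0 _ m2)) in hh.
      have A : E' x.1 /\ lM L0 (ev_meth x.1) by auto.
      have B : E' y.1 /\ lM L0 (ev_meth y.1) by auto.
      apply YE in A. apply YE in B. split; [exact hh|split; auto].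
Qed.
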